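(* Let $K\subset\mathbb{R}^3$ be a convex body with $K=-K$ and $\mathrm{r}_2(K)>0$. Then \[ \frac{\widetilde{\mathrm{r}}_2(K)}{\mathrm{r}_2(K)}\leq\frac{2}{\sqrt{3}}. \] Moreover, the inequality is best possible: there exists such a $K$ for which equality holds.
   Context: A convex body is a compact convex subset of $\mathbb{R}^3$. For a set $C$ contained in an affine subspace $A$, $\mathrm{r}(C;A)$ denotes the Euclidean inradius of $C$ measured within $A$. $\mathcal{L}^3_2$ is the set of 2-dimensional linear subspaces, $K|L$ the orthogonal projection onto $L$. Define $\mathrm{r}_2(K)=\max_{L\in\mathcal{L}^3_2}\max_{x\in L^\perp}\mathrm{r}(K\cap(x+L);x+L)$ (largest radius of a planar disc contained in $K$) and $\widetilde{\mathrm{r}}_2(K)=\max_{L\in\mathcal{L}^3_2}\mathrm{r}(K|L;L)$. *)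

(* Defs.v *)
From HB Require Import structures.
From mathcomp Require Import all_boot all_order all_algebra.
From mathcomp Require Import all_classical all_reals all_analysis.
Set Implicit Arguments. Unset Strict Implicit. Unset Printing Implicit Defensive.
Import Order.TTheory GRing.Theory Num.Theory.
Import numFieldNormedType.Exports.
Local Open Scope ring_scope.
Local Open Scope classical_set_scope.

Definition dot3 {R : realType} (u v : 'rV[R]_3) : R := \sum_(i < 3) u 0 i * v 0 i.

(* (u, v) is an orthonormal basis of a 2-dimensional linear subspace L of R^3;
   every L in L^3_2 arises this way. *)
Definition orthonormal2 {R : realType} (u v : 'rV[R]_3) : Prop :=
  dot3 u u = 1 /\ dot3 v v = 1 /\ dot3 u v = 0.

Definition convex3 {R : realType} (K : set 'rV[R]_3) : Prop :=
  forall x y, K x -> K y -> forall t : R, 0 <= t <= 1 -> K (t *: x + (1 - t) *: y).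

Definition convex_body {R : realType} (K : set 'rV[R]_3) : Prop :=
  compact K /\ convex3 K.

Definition origin_symmetric {R : realType} (K : set 'rV[R]_3) : Prop :=
  K = [set - x | x in K].

Definition section_disc_radii {R : realType} (K : set 'rV[R]_3) : set R :=
  [set r | 0 <= r /\ exists u v c : 'rV[R]_3, orthonormal2 u v /\
     forall a b : R, a ^+ 2 + b ^+ 2 <= r ^+ 2 -> K (c + a *: u + b *: v)].

(* r_2(K) = max_L max_{x in L^perp} r(K cap (x+L); x+L)
          = sup of radii of planar discs contained in K. *)
Definition r2 {R : realType} (K : set 'rV[R]_3) : R := sup (section_disc_radii K).

(* radii r of discs in L = span(u,v) contained in the orthogonal projection K|L;
   the disc is centered at p u + q v, and a point a u + b v of L lies in K|L iff
   some x in K has (x.u, x.v) = (a, b). *)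
Definition projection_disc_radii {R : realType} (K : set 'rV[R]_3) : set R :=
  [set r | 0 <= r /\ exists u v : 'rV[R]_3, orthonormal2 u v /\
     exists p q : R, forall a b : R, (a - p) ^+ 2 + (b - q) ^+ 2 <= r ^+ 2 ->
       exists x, K x /\ dot3 x u = a /\ dot3 x v = b].

(* tilde r_2(K) = max_L r(K|L; L) *)
Definition rt2 {R : realType} (K : set 'rV[R]_3) : R := sup (projection_disc_radii K).

(* Main.v *)
Require Import Defs.
From HB Require Import structures.
From mathcomp Require Import all_boot all_order all_algebra.
From mathcomp Require Import all_classical all_reals all_analysis.
From mathcomp Require Import ring lra.
Set Implicit Arguments. Unset Strict Implicit. Unset Printing Implicit Defensive.
Import Order.TTheory GRing.Theory Num.Theory.
Import numFieldNormedType.Exports.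
Local Open Scope ring_scope.
Local Open Scope classical_set_scope.


Section Geo.
Variable R : realType.
Local Notation V := 'rV[R]_3.
Implicit Types (x y z : V) (a b c : R).
Definition i0 : 'I_3 := @Ordinal 3 0 isT.
Definition i1 : 'I_3 := @Ordinal 3 1 isT.
Definition i2 : 'I_3 := @Ordinal 3 2 isT.

Lemma dot3E (x y : V) : dot3 x y = x 0 i0 * y 0 i0 + x 0 i1 * y 0 i1 + x 0 i2 * y 0 i2.
Proof. rewrite /dot3 !big_ord_recl big_ord0 addr0 addrA.
by congr (_ * _ + _ * _ + _ * _); congr (_ _ _); apply/val_inj. Qed.

Lemma ord3P (P : 'I_3 -> Prop) : P i0 -> P i1 -> P i2 -> forall j, P j.
Proof. by move=> h0 h1 h2 [[|[|[|j]]] hj] //; [ rewrite (_ : Ordinal hj = i0) | rewrite (_ : Ordinal hj = i1) | rewrite (_ : Ordinal hj = i2)] => //; apply/val_inj. Qed.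

Lemma vecP (x y : V) : x 0 i0 = y 0 i0 -> x 0 i1 = y 0 i1 -> x 0 i2 = y 0 i2 -> x = y.
Proof. move=> h0 h1 h2; apply/rowP; apply: ord3P; by rewrite ?mxE. Qed.

Definition mk3 (a b c : R) : V := \row_(j < 3) (if j == i0 then a else if j == i1 then b else c).
Lemma mk3E0 a b c : mk3 a b c 0 i0 = a. Proof. by rewrite mxE. Qed.
Lemma mk3E1 a b c : mk3 a b c 0 i1 = b. Proof. by rewrite mxE. Qed.
Lemma mk3E2 a b c : mk3 a b c 0 i2 = c. Proof. by rewrite mxE. Qed.

Definition cross (u v : V) : V := mk3 (u 0 i1 * v 0 i2 - u 0 i2 * v 0 i1)
  (u 0 i2 * v 0 i0 - u 0 i0 * v 0 i2) (u 0 i0 * v 0 i1 - u 0 i1 * v 0 i0).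

Lemma dotC x y : dot3 x y = dot3 y x.
Proof. rewrite !dot3E; ring. Qed.
Lemma dotDl x y z : dot3 (x + y) z = dot3 x z + dot3 y z.
Proof. rewrite !dot3E !mxE; ring. Qed.
Lemma dotZl a x z : dot3 (a *: x) z = a * dot3 x z.
Proof. rewrite !dot3E !mxE; ring. Qed.
Lemma dotNl x z : dot3 (- x) z = - dot3 x z.
Proof. rewrite !dot3E !mxE; ring. Qed.
Lemma dotBl x y z : dot3 (x - y) z = dot3 x z - dot3 y z.
Proof. by rewrite dotDl dotNl. Qed.
Lemma dot0l z : dot3 0 z = 0.
Proof. rewrite !dot3E !mxE; ring. Qed.

Lemma dot_ge0 x : 0 <= dot3 x x.
Proof. rewrite dot3E; nra. Qed.
Lemma dot_eq0 x : dot3 x x = 0 -> x = 0.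
Proof.
rewrite dot3E => h; apply: vecP; rewrite mxE; apply/eqP; rewrite -sqrf_eq0 expr2; apply/eqP; nra.
Qed.

Section Frame.
Variables u v : V.
Hypothesis ouv : orthonormal2 u v.
Let e := cross u v.
Lemma frame_eu : dot3 e u = 0.
Proof. rewrite /e !dot3E /cross mk3E0 mk3E1 mk3E2; ring. Qed.
Lemma frame_ev : dot3 e v = 0.
Proof. rewrite /e !dot3E /cross mk3E0 mk3E1 mk3E2; ring. Qed.
Lemma frame_ee : dot3 e e = 1.
Proof.
case: ouv => [h1 [h2 h3]].
have -> : dot3 e e = dot3 u u * dot3 v v - dot3 u v ^+ 2.
  rewrite /e !dot3E /cross mk3E0 mk3E1 mk3E2; ring.
by rewrite h1 h2 h3; ring.
Qed.
Lemma parseval x : dot3 x x = dot3 x u ^+ 2 + dot3 x v ^+ 2 + dot3 x e ^+ 2.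
Proof.
case: ouv => [h1 [h2 h3]].
have -> : dot3 x e ^+ 2 = dot3 x x * dot3 u u * dot3 v v + 2 * dot3 x u * dot3 u v * dot3 v x
   - dot3 x x * dot3 u v ^+ 2 - dot3 u u * dot3 x v ^+ 2 - dot3 v v * dot3 x u ^+ 2.
  rewrite /e !dot3E /cross mk3E0 mk3E1 mk3E2; ring.
rewrite h1 h2 h3; ring.
Qed.
Lemma decomp x : x = dot3 x u *: u + dot3 x v *: v + dot3 x e *: e.
Proof.
case: ouv => [h1 [h2 h3]].
apply/eqP; rewrite -subr_eq0; apply/eqP; apply: dot_eq0.
set y := _ - _.
have hu : dot3 y u = 0.
  by rewrite /y dotBl !dotDl !dotZl h1 (dotC v u) h3 frame_eu; ring.
have hv : dot3 y v = 0.
  by rewrite /y dotBl !dotDl !dotZl h2 h3 frame_ev; ring.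
have he : dot3 y e = 0.
  by rewrite /y dotBl !dotDl !dotZl frame_ee (dotC u e) (dotC v e) frame_eu frame_ev; ring.
by rewrite parseval hu hv he; ring.
Qed.
End Frame.
End Geo.


Section Rot.
Variable R : realType.
Implicit Types (a b : R).
Definition s3 : R := Num.sqrt 3.
Lemma s3sq : s3 ^+ 2 = 3. Proof. by rewrite sqr_sqrtr. Qed.
Lemma s3_gt0 : 0 < s3. Proof. by rewrite sqrtr_gt0. Qed.
Definition R1x a b := a / 2 - s3 / 2 * b.
Definition R1y a b := s3 / 2 * a + b / 2.
Definition R2x a b := - a / 2 - s3 / 2 * b.
Definition R2y a b := s3 / 2 * a - b / 2.
Definition R4x a b := - a / 2 + s3 / 2 * b.
Definition R4y a b := - (s3 / 2 * a) - b / 2.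
Lemma s3ab a : s3 ^+ 2 * a = 3 * a. Proof. by rewrite s3sq. Qed.
Ltac s3t a b := move: (s3ab a) (s3ab b); rewrite /R1x /R1y /R2x /R2y /R4x /R4y; lra.
Lemma R21x a b : R2x (R1x a b) (R1y a b) = - a. Proof. s3t a b. Qed.
Lemma R21y a b : R2y (R1x a b) (R1y a b) = - b. Proof. s3t a b. Qed.
Lemma R41x a b : R4x (R1x a b) (R1y a b) = - R2x a b. Proof. s3t a b. Qed.
Lemma R41y a b : R4y (R1x a b) (R1y a b) = - R2y a b. Proof. s3t a b. Qed.
Lemma R1xE a b : R1x a b = - R4x a b. Proof. s3t a b. Qed.
Lemma R1yE a b : R1y a b = - R4y a b. Proof. s3t a b. Qed.
Lemma R4xE a b : R4x a b = - (a + R2x a b). Proof. s3t a b. Qed.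
Lemma R4yE a b : R4y a b = - (b + R2y a b). Proof. s3t a b. Qed.
Lemma R22x a b : R2x (R2x a b) (R2y a b) = R4x a b. Proof. s3t a b. Qed.
Lemma R22y a b : R2y (R2x a b) (R2y a b) = R4y a b. Proof. s3t a b. Qed.
Lemma R42x a b : R4x (R2x a b) (R2y a b) = a. Proof. s3t a b. Qed.
Lemma R42y a b : R4y (R2x a b) (R2y a b) = b. Proof. s3t a b. Qed.
Lemma R11x a b : R1x (R1x a b) (R1y a b) = R2x a b. Proof. s3t a b. Qed.
Lemma R11y a b : R1y (R1x a b) (R1y a b) = R2y a b. Proof. s3t a b. Qed.
Lemma R1n a b : R1x a b ^+ 2 + R1y a b ^+ 2 = a ^+ 2 + b ^+ 2.
Proof. have hs3 := s3sq.
rewrite /R1x /R1y; have -> : forall x y : R, (x / 2 - s3 / 2 * y) ^+ 2 + (s3 / 2 * x + y / 2) ^+ 2 =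
   (x ^+ 2 + y ^+ 2) / 4 + s3 ^+ 2 * (x ^+ 2 + y ^+ 2) / 4 by move=> x y; field.
by rewrite hs3; field. Qed.
Lemma R2n a b : R2x a b ^+ 2 + R2y a b ^+ 2 = a ^+ 2 + b ^+ 2.
Proof. have hs3 := s3sq.
rewrite /R2x /R2y; have -> : forall x y : R, (- x / 2 - s3 / 2 * y) ^+ 2 + (s3 / 2 * x - y / 2) ^+ 2 =
   (x ^+ 2 + y ^+ 2) / 4 + s3 ^+ 2 * (x ^+ 2 + y ^+ 2) / 4 by move=> x y; field.
by rewrite hs3; field. Qed.
Lemma R4n a b : R4x a b ^+ 2 + R4y a b ^+ 2 = a ^+ 2 + b ^+ 2.
Proof. have hs3 := s3sq.
rewrite /R4x /R4y; have -> : forall x y : R, (- x / 2 + s3 / 2 * y) ^+ 2 + (- (s3 / 2 * x) - y / 2) ^+ 2 =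
   (x ^+ 2 + y ^+ 2) / 4 + s3 ^+ 2 * (x ^+ 2 + y ^+ 2) / 4 by move=> x y; field.
by rewrite hs3; field. Qed.

Lemma cont_add (f g : R -> R) : continuous f -> continuous g -> continuous (fun t => f t + g t).
Proof. by move=> cf cg x; apply: cvgD; [exact: cf | exact: cg]. Qed.
Lemma cont_mul (f g : R -> R) : continuous f -> continuous g -> continuous (fun t => f t * g t).
Proof. by move=> cf cg x; apply: cvgM; [exact: cf | exact: cg]. Qed.
Lemma cont_inv (f : R -> R) : continuous f -> (forall t, f t != 0) -> continuous (fun t => (f t)^-1).
Proof. by move=> cf nz x; apply: cvgV; [exact: nz | exact: cf]. Qed.
Lemma cont_cst (c : R) : continuous (fun _ : R => c).
Proof. by move=> x; exact: cvg_cst. Qed.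
Lemma cont_id : continuous (fun t : R => t).
Proof. by move=> x; exact: cvg_id. Qed.
Lemma cont_lin (c d : R) (f g : R -> R) : continuous f -> continuous g -> continuous (fun t => c * f t + d * g t).
Proof. by move=> cf cg; apply: cont_add; apply: cont_mul => //; apply: cont_cst. Qed.
Lemma cont_R1x (f g : R -> R) : continuous f -> continuous g -> continuous (fun t => R1x (f t) (g t)).
Proof. move=> cf cg.
have -> : (fun t => R1x (f t) (g t)) = (fun t => (1/2) * f t + (- (s3 / 2)) * g t).
  by apply: funext => t; rewrite /R1x; field.
exact: cont_lin. Qed.
Lemma cont_R1y (f g : R -> R) : continuous f -> continuous g -> continuous (fun t => R1y (f t) (g t)).
Proof. move=> cf cg.
have -> : (fun t => R1y (f t) (g t)) = (fun t => (s3 / 2) * f t + (1/2) * g t).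
  by apply: funext => t; rewrite /R1y; field.
exact: cont_lin. Qed.
Lemma cont_R2x (f g : R -> R) : continuous f -> continuous g -> continuous (fun t => R2x (f t) (g t)).
Proof. move=> cf cg.
have -> : (fun t => R2x (f t) (g t)) = (fun t => (- (1/2)) * f t + (- (s3 / 2)) * g t).
  by apply: funext => t; rewrite /R2x; field.
exact: cont_lin. Qed.
Lemma cont_R2y (f g : R -> R) : continuous f -> continuous g -> continuous (fun t => R2y (f t) (g t)).
Proof. move=> cf cg.
have -> : (fun t => R2y (f t) (g t)) = (fun t => (s3 / 2) * f t + (- (1/2)) * g t).
  by apply: funext => t; rewrite /R2y; field.
exact: cont_lin. Qed.
Lemma cont_R4x (f g : R -> R) : continuous f -> continuous g -> continuous (fun t => R4x (f t) (g t)).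
Proof. move=> cf cg.
have -> : (fun t => R4x (f t) (g t)) = (fun t => (- (1/2)) * f t + (s3 / 2) * g t).
  by apply: funext => t; rewrite /R4x; field.
exact: cont_lin. Qed.
Lemma cont_R4y (f g : R -> R) : continuous f -> continuous g -> continuous (fun t => R4y (f t) (g t)).
Proof. move=> cf cg.
have -> : (fun t => R4y (f t) (g t)) = (fun t => (- (s3 / 2)) * f t + (- (1/2)) * g t).
  by apply: funext => t; rewrite /R4y; field.
exact: cont_lin. Qed.
End Rot.
Arguments s3 {R}.

Section Fiber.
Variable R : realType.
Variable G : R -> R -> R -> Prop.
Variables M r : R.
Hypothesis r_gt0 : 0 < r.
Hypothesis Gconv : forall a b t a' b' t' l, G a b t -> G a' b' t' -> 0 <= l <= 1 ->
  G (l * a + (1 - l) * a') (l * b + (1 - l) * b') (l * t + (1 - l) * t').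
Hypothesis Gsym : forall a b t, G a b t -> G (- a) (- b) (- t).
Hypothesis Gbd : forall a b t, G a b t -> `|t| <= M.
Hypothesis Gcl : forall a b, closed [set t | G a b t].
Hypothesis Gproj : forall a b, a ^+ 2 + b ^+ 2 <= r ^+ 2 -> exists t, G a b t.

Definition fib a b := sup [set t | G a b t].

Lemma fib_has_sup a b t : G a b t -> has_sup [set t | G a b t].
Proof.
move=> h; split; first by exists t.
by exists M => s /Gbd /(le_trans (ler_norm _)).
Qed.

Lemma fib_max a b t : G a b t -> t <= fib a b.
Proof. by move=> h; apply: sup_upper_bound (fib_has_sup h) _ h. Qed.

Lemma fibG a b : a ^+ 2 + b ^+ 2 <= r ^+ 2 -> G a b (fib a b).
Proof.
move=> /Gproj [t h]; have [ne ub] := fib_has_sup h.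
have := closure_sup ne ub.
by rewrite -(proj1 (closure_id _) (@Gcl a b)).
Qed.

Lemma fib_bd a b : a ^+ 2 + b ^+ 2 <= r ^+ 2 -> `|fib a b| <= M.
Proof. by move=> /fibG /Gbd. Qed.

Lemma fib_conc a b a' b' l : a ^+ 2 + b ^+ 2 <= r ^+ 2 -> a' ^+ 2 + b' ^+ 2 <= r ^+ 2 ->
  0 <= l <= 1 ->
  l * fib a b + (1 - l) * fib a' b' <= fib (l * a + (1 - l) * a') (l * b + (1 - l) * b').
Proof. by move=> h h' hl; apply: fib_max; apply: Gconv => //; apply: fibG. Qed.

Lemma fib_odd a b : a ^+ 2 + b ^+ 2 <= r ^+ 2 -> 0 <= fib a b + fib (- a) (- b).
Proof.
move=> h; have := fib_max (Gsym (fibG h)).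
by rewrite -subr_ge0 opprK addrC.
Qed.

Lemma M_ge0 : 0 <= M.
Proof.
have [t /Gbd] : exists t, G 0 0 t by apply: Gproj; rewrite expr0n /= addr0 exprn_ge0 // ltW.
by apply: le_trans.
Qed.

Lemma sqrt_sq (x : R) : 0 <= x -> Num.sqrt x ^+ 2 = x.
Proof. exact: sqr_sqrtr. Qed.

Lemma fib_lip rho a b a' b' : 0 < rho < r ->
  a ^+ 2 + b ^+ 2 <= rho ^+ 2 -> a' ^+ 2 + b' ^+ 2 <= rho ^+ 2 ->
  fib a' b' - fib a b <= 2 * M / (r - rho) * Num.sqrt ((a - a') ^+ 2 + (b - b') ^+ 2).
Proof.
move=> /andP [rho0 rhor] h h'.
set d := Num.sqrt _.
have d0 : 0 <= d by apply: sqrtr_ge0.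
have dd : d ^+ 2 = (a - a') ^+ 2 + (b - b') ^+ 2 by apply: sqrt_sq; rewrite addr_ge0 // sqr_ge0.
have hr : a ^+ 2 + b ^+ 2 <= r ^+ 2 by nra.
have hr' : a' ^+ 2 + b' ^+ 2 <= r ^+ 2 by nra.
have M0 := M_ge0.
set s := r - rho.
have s0 : 0 < s by rewrite /s subr_gt0.
have [d_eq0 | d_gt0] := eqVneq d 0.
  rewrite d_eq0 expr0n /= in dd.
  have := sqr_ge0 (b - b'); have := sqr_ge0 (a - a') => z1 z2.
  have q1 : (a - a') ^+ 2 = 0 by apply/eqP; rewrite eq_le sqr_ge0 andbT; lra.
  have q2 : (b - b') ^+ 2 = 0 by apply/eqP; rewrite eq_le sqr_ge0 andbT; lra.
  move/eqP: q1; rewrite sqrf_eq0 subr_eq0 => /eqP e1.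
  move/eqP: q2; rewrite sqrf_eq0 subr_eq0 => /eqP e2.
  by rewrite e1 e2 subrr d_eq0 mulr0.
have dp : 0 < d by rewrite lt_def d_gt0 d0.
set p1 := a + s * (a - a') / d.
set p2 := b + s * (b - b') / d.
have cs : (a * (a - a') + b * (b - b')) ^+ 2 <= (rho * d) ^+ 2.
  rewrite exprMn dd.
  move: (a - a') (b - b') => x y.
  have lag : (a ^+ 2 + b ^+ 2) * (x ^+ 2 + y ^+ 2) - (a * x + b * y) ^+ 2 = (a * y - b * x) ^+ 2 by ring.
  have := sqr_ge0 (a * y - b * x).
  have : (a ^+ 2 + b ^+ 2) * (x ^+ 2 + y ^+ 2) <= rho ^+ 2 * (x ^+ 2 + y ^+ 2).
    by apply: ler_wpM2r => //; rewrite addr_ge0 // sqr_ge0.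
  lra.
have cs' : a * (a - a') + b * (b - b') <= rho * d.
  have : 0 <= rho * d by nra.
  nra.
have hp : p1 ^+ 2 + p2 ^+ 2 <= r ^+ 2.
  have -> : p1 ^+ 2 + p2 ^+ 2 = a ^+ 2 + b ^+ 2 + 2 * s * (a * (a - a') + b * (b - b')) / d
      + s ^+ 2 * (((a - a') ^+ 2 + (b - b') ^+ 2) / d ^+ 2).
    rewrite /p1 /p2; field; by rewrite lt0r_neq0.
  rewrite -dd divff ?mulr1; last by rewrite expf_neq0 // lt0r_neq0.
  have : 2 * s * (a * (a - a') + b * (b - b')) / d <= 2 * s * rho.
    rewrite ler_pdivrMr //; nra.
  have -> : r = rho + s by rewrite /s; ring.
  nra.
set l := d / (d + s).
have l01 : 0 <= l <= 1.
  rewrite /l divr_ge0 /= ?ler_pdivrMr; try nra.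
have := fib_conc hp hr' l01.
have -> : l * p1 + (1 - l) * a' = a.
  rewrite /l /p1; field; apply/andP; split; rewrite lt0r_neq0 //; nra.
have -> : l * p2 + (1 - l) * b' = b.
  rewrite /l /p2; field; apply/andP; split; rewrite lt0r_neq0 //; nra.
move=> hc.
have bp := fib_bd hp; have ba := fib_bd hr'.
have lle : l <= d / s.
  rewrite /l ler_pdivrMr; last nra.
  rewrite mulrAC ler_pdivlMr //; nra.
have : fib a' b' - fib a b <= l * (fib a' b' - fib p1 p2) by nra.
move=> h1; apply: (le_trans h1).
have hdiff : fib a' b' - fib p1 p2 <= 2 * M.
  move: bp ba; rewrite !ler_norml => /andP [? ?] /andP [? ?]; nra.
have l0 : 0 <= l by case/andP: l01.
have z1 := ler_wpM2l l0 hdiff.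
have z2 : l * (2 * M) <= d / s * (2 * M) by apply: ler_wpM2r => //; nra.
have -> : 2 * M / s * d = d / s * (2 * M) by rewrite /=; ring.
lra.
Qed.

Lemma sqrt_le_abs (x y : R) : Num.sqrt (x ^+ 2 + y ^+ 2) <= `|x| + `|y|.
Proof.
set s := Num.sqrt _.
have s0 : 0 <= s by apply: sqrtr_ge0.
have ss : s ^+ 2 = x ^+ 2 + y ^+ 2 by apply: sqrt_sq; rewrite addr_ge0 // sqr_ge0.
have ax : `|x| ^+ 2 = x ^+ 2 by rewrite real_normK // num_real.
have ay : `|y| ^+ 2 = y ^+ 2 by rewrite real_normK // num_real.
have := normr_ge0 x; have := normr_ge0 y => hx hy.
nra.
Qed.

Lemma fib_cont rho (p q : R -> R) : 0 < rho < r -> continuous p -> continuous q ->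
  (forall t, p t ^+ 2 + q t ^+ 2 <= rho ^+ 2) -> continuous (fun t => fib (p t) (q t)).
Proof.
move=> hrho cp cq hn t.
apply/cvgrPdist_lt => eps eps0.
set L := 2 * M / (r - rho).
have L0 : 0 <= L.
  rewrite /L divr_ge0 //; first by have := M_ge0; lra.
  by case/andP: hrho => ? ?; lra.
set e' := eps / (2 * (L + 1)).
have e'0 : 0 < e' by rewrite /e' divr_gt0 //; lra.
have np : \forall s \near t, `|p t - p s| < e' by move: (cp t) => /cvgrPdist_lt; apply.
have nq : \forall s \near t, `|q t - q s| < e' by move: (cq t) => /cvgrPdist_lt; apply.
near=> s.
have h1 : `|p t - p s| < e' by near: s; exact: np.
have h2 : `|q t - q s| < e' by near: s; exact: nq.
have l1 := fib_lip hrho (hn t) (hn s).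
have l2 := fib_lip hrho (hn s) (hn t).
have sq := sqrt_le_abs (p t - p s) (q t - q s).
have e1 : (p s - p t) ^+ 2 = (p t - p s) ^+ 2 by rewrite -opprB sqrrN.
have e2 : (q s - q t) ^+ 2 = (q t - q s) ^+ 2 by rewrite -opprB sqrrN.
rewrite e1 e2 in l2.
move: sq l1 l2; set D := Num.sqrt _ => sq l1 l2.
have D0 : 0 <= D by apply: sqrtr_ge0.
rewrite -/L in l1 l2.
have hD : D < 2 * e' by lra.
have hLD : L * D <= L * (2 * e') by apply: ler_wpM2l => //; lra.
have : L * (2 * e') < eps.
  have -> : L * (2 * e') = eps * (L / (L + 1)).
    rewrite /e'; field; rewrite lt0r_neq0 //; lra.
  have : L / (L + 1) < 1 by rewrite ltr_pdivrMr; lra.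
  nra.
rewrite ltr_norml; lra.
Unshelve. all: by end_near.
Qed.

Definition Phi a b := fib a b + fib (R2x a b) (R2y a b) + fib (R4x a b) (R4y a b).
Definition wx rho (t : R) := rho * (1 - t ^+ 2) / (1 + t ^+ 2).
Definition wy rho (t : R) := rho * (2 * t) / (1 + t ^+ 2).

Lemma wn rho t : wx rho t ^+ 2 + wy rho t ^+ 2 = rho ^+ 2.
Proof.
rewrite /wx /wy; field.
by rewrite lt0r_neq0 // ltr_pwDl // sqr_ge0.
Qed.

Lemma cont_sq : continuous (fun t : R => t ^+ 2).
Proof.
have -> : (fun t : R => t ^+ 2) = (fun t => t * t) by apply: funext => t; rewrite expr2.
have h := @cont_mul R _ _ (@cont_id R) (@cont_id R); exact h.
Qed.

Lemma cont_den : continuous (fun t : R => (1 + t ^+ 2)^-1).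
Proof.
apply: (@cont_inv R (fun t => 1 + t ^+ 2)).
  have h := @cont_add R _ _ (@cont_cst R 1) cont_sq; exact h.
by move=> t; rewrite lt0r_neq0 // ltr_pwDl // sqr_ge0.
Qed.

Lemma cont_wx rho : continuous (wx rho).
Proof.
have c1 : continuous (fun t : R => rho * (1 - t ^+ 2)).
  have -> : (fun t : R => rho * (1 - t ^+ 2)) = (fun t => rho * 1 + (- rho) * t ^+ 2).
    by apply: funext => t; ring.
  have h := @cont_lin R rho (- rho) _ _ (@cont_cst R 1) cont_sq; exact h.
have h := @cont_mul R _ _ c1 cont_den; exact h.
Qed.

Lemma cont_wy rho : continuous (wy rho).
Proof.
have c1 : continuous (fun t : R => rho * (2 * t)).
  have -> : (fun t : R => rho * (2 * t)) = (fun t => (2 * rho) * t + 0 * t).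
    by apply: funext => t; ring.
  have h := @cont_lin R (2 * rho) 0 _ _ (@cont_id R) (@cont_id R); exact h.
have h := @cont_mul R _ _ c1 cont_den; exact h.
Qed.

Lemma fib_mid a b : a ^+ 2 + b ^+ 2 <= r ^+ 2 -> G a b ((fib a b - fib (- a) (- b)) / 2).
Proof.
move=> h.
have h' : (- a) ^+ 2 + (- b) ^+ 2 <= r ^+ 2 by rewrite !sqrrN.
have g1 := fibG h.
have := Gsym (fibG h'); rewrite !opprK => g2.
have := Gconv (l := 1/2) g1 g2.
have e : forall x : R, 1 / 2 * x + (1 - 1 / 2) * x = x by move=> x; field.
rewrite !e; have -> : 1 / 2 * fib a b + (1 - 1 / 2) * - fib (- a) (- b) = (fib a b - fib (- a) (- b)) / 2.
  by field.
by apply; rewrite divr_ge0 //= ler_pdivrMr // mul1r ler1n.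
Qed.

Lemma cPhi rho (p q : R -> R) : 0 < rho < r -> continuous p -> continuous q ->
  (forall t, p t ^+ 2 + q t ^+ 2 = rho ^+ 2) -> continuous (fun t => Phi (p t) (q t)).
Proof.
move=> hr cp cq hn.
have n0 : forall t, p t ^+ 2 + q t ^+ 2 <= rho ^+ 2 by move=> t; rewrite hn.
have n2 : forall t, R2x (p t) (q t) ^+ 2 + R2y (p t) (q t) ^+ 2 <= rho ^+ 2 by move=> t; rewrite R2n hn.
have n4 : forall t, R4x (p t) (q t) ^+ 2 + R4y (p t) (q t) ^+ 2 <= rho ^+ 2 by move=> t; rewrite R4n hn.
have c1 := fib_cont hr cp cq n0.
have c2 := @fib_cont rho _ _ hr (cont_R2x cp cq) (cont_R2y cp cq) n2.
have c4 := @fib_cont rho _ _ hr (cont_R4x cp cq) (cont_R4y cp cq) n4.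
have h := cont_add (cont_add c1 c2) c4; exact h.
Qed.

Lemma Phi_R2 a b : Phi (R2x a b) (R2y a b) = Phi a b.
Proof. rewrite /Phi R22x R22y R42x R42y; ring. Qed.

Lemma s3_3 : (s3 / 3 : R) ^+ 2 = 1 / 3.
Proof. by rewrite expr_div_n s3sq; field. Qed.

Lemma hexlift rho : 0 < rho < r -> exists a b c0 c2,
  [/\ a ^+ 2 + b ^+ 2 = rho ^+ 2, G a b c0, G (R2x a b) (R2y a b) c2 &
      G (R4x a b) (R4y a b) (- (c0 + c2))].
Proof.
move=> hr.
have rr : rho ^+ 2 <= r ^+ 2 by case/andP: hr => ? ?; rewrite ler_sqr ?nnegrE; lra.
pose g := fun t => Phi (wx rho t) (wy rho t) - Phi (R1x (wx rho t) (wy rho t)) (R1y (wx rho t) (wy rho t)).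
have cg : continuous g.
  have c1 := cPhi hr (@cont_wx rho) (@cont_wy rho) (@wn rho).
  have c2 := @cPhi rho _ _ hr (cont_R1x (@cont_wx rho) (@cont_wy rho)) (cont_R1y (@cont_wx rho) (@cont_wy rho))
     (fun t => etrans (R1n _ _) (@wn rho t)).
  have -> : g = (fun t => 1 * Phi (wx rho t) (wy rho t) + (-1) * Phi (R1x (wx rho t) (wy rho t)) (R1y (wx rho t) (wy rho t))).
    by apply: funext => t; rewrite /g; ring.
  have h := @cont_lin R 1 (-1) _ _ c1 c2; exact h.
have w0x : wx rho 0 = rho by rewrite /wx expr0n /= subr0 addr0 mulr1 divr1.
have w0y : wy rho 0 = 0 by rewrite /wy mulr0 mulr0 mul0r.
have w1x : wx rho (s3 / 3) = R1x rho 0 by rewrite /wx /R1x s3_3; field.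
have w1y : wy rho (s3 / 3) = R1y rho 0.
  by rewrite /wy /R1y s3_3; field.
have gb : g (s3 / 3) = - g 0.
  rewrite /g w0x w0y w1x w1y R11x R11y Phi_R2; ring.
have b0 : 0 <= s3 / 3 :> R by rewrite divr_ge0 // ltW // s3_gt0.
have hm : Num.min (g 0) (g (s3 / 3)) <= 0 <= Num.max (g 0) (g (s3 / 3)).
  rewrite gb; apply/andP; split; [rewrite ge_min | rewrite le_max]; apply/orP;
    case: (lerP 0 (g 0)) => h; [right | left | left | right]; lra.
have [c _ gc] := @IVT R g 0 (s3 / 3) 0 b0 (continuous_subspaceT cg) hm.
set a := wx rho c; set b := wy rho c.
have nab : a ^+ 2 + b ^+ 2 = rho ^+ 2 by apply: wn.
have nab' : a ^+ 2 + b ^+ 2 <= r ^+ 2 by rewrite nab.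
have n2 : R2x a b ^+ 2 + R2y a b ^+ 2 <= r ^+ 2 by rewrite R2n.
have n4 : R4x a b ^+ 2 + R4y a b ^+ 2 <= r ^+ 2 by rewrite R4n.
have hP : Phi a b = Phi (R1x a b) (R1y a b) by apply/eqP; rewrite -subr_eq0 -/(g c) gc.
move: hP; rewrite /Phi R21x R21y R41x R41y R1xE R1yE => hP.
exists a, b, ((fib a b - fib (- a) (- b)) / 2),
  ((fib (R2x a b) (R2y a b) - fib (- R2x a b) (- R2y a b)) / 2); split => //.
- exact: fib_mid.
- exact: fib_mid.
have := fib_mid n4.
have -> : (fib (R4x a b) (R4y a b) - fib (- R4x a b) (- R4y a b)) / 2 =
  - ((fib a b - fib (- a) (- b)) / 2 + (fib (R2x a b) (R2y a b) - fib (- R2x a b) (- R2y a b)) / 2).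
  lra.
done.
Qed.

End Fiber.


Section Hex.
Variable R : realType.
Local Notation V := 'rV[R]_3.
Implicit Types (x y z : V) (a b c : R).

Lemma dotDr x y z : dot3 x (y + z) = dot3 x y + dot3 x z.
Proof. by rewrite dotC dotDl !(dotC _ x). Qed.
Lemma dotZr a x z : dot3 x (a *: z) = a * dot3 x z.
Proof. by rewrite dotC dotZl dotC. Qed.
Lemma dotNr x z : dot3 x (- z) = - dot3 x z.
Proof. by rewrite dotC dotNl dotC. Qed.

Lemma qf a b x y : dot3 (a *: x + b *: y) (a *: x + b *: y) =
  a ^+ 2 * dot3 x x + 2 * a * b * dot3 x y + b ^+ 2 * dot3 y y.
Proof. rewrite !dotDl !dotDr !dotZl !dotZr (dotC y x); ring. Qed.

Variable K : set V.
Hypothesis convK : convex3 K.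
Hypothesis symK : origin_symmetric K.

Lemma symK' x : K x -> K (- x).
Proof. by move=> h; rewrite symK; exists x. Qed.

Lemma conv0 X Y p q : K X -> K Y -> 0 <= p -> 0 <= q -> p + q <= 1 -> K (p *: X + q *: Y).
Proof.
move=> hX hY p0 q0 pq.
have K0 : K 0.
  have := convK hX (symK' hX) (t := 1/2).
  have -> : 1 / 2 *: X + (1 - 1 / 2) *: - X = 0.
    by apply: vecP; rewrite !mxE; field.
  by apply; rewrite divr_ge0 //= ler_pdivrMr // mul1r ler1n.
have [pq0 | pq0] := eqVneq (p + q) 0.
  have p00 : p = 0 by lra.
  have q00 : q = 0 by lra.
  by rewrite p00 q00 !scale0r addr0.
have pqp : 0 < p + q by rewrite lt_def pq0 /=; lra.
have hM : K ((p / (p + q)) *: X + (1 - p / (p + q)) *: Y).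
  apply: convK => //; rewrite divr_ge0 //= ?ler_pdivrMr //; lra.
have := convK hM K0 (t := p + q).
have -> : (p + q) *: (p / (p + q) *: X + (1 - p / (p + q)) *: Y) + (1 - (p + q)) *: 0 = p *: X + q *: Y.
  apply: vecP; rewrite !mxE; field; by rewrite pq0.
by apply; apply/andP; split; lra.
Qed.

Lemma hexagon Q0 Q2 al be : K Q0 -> K Q2 -> K (- (Q0 + Q2)) ->
  al ^+ 2 - al * be + be ^+ 2 <= 3 / 4 -> K (al *: Q0 + be *: Q2).
Proof.
move=> h0 h2 h4 hq.
have hb2 : be ^+ 2 <= 1 by have := sqr_ge0 (al - be / 2); lra.
have ha2 : al ^+ 2 <= 1 by have := sqr_ge0 (be - al / 2); lra.
have hab2 : (al - be) ^+ 2 <= 1 by have := sqr_ge0 (al + be); lra.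
have hb1 : be <= 1 by nra.
have hb1' : -1 <= be by nra.
have ha1 : al <= 1 by nra.
have ha1' : -1 <= al by nra.
have hab : al - be <= 1 by nra.
have hab' : -1 <= al - be by nra.
have h4' : K (Q0 + Q2) by rewrite -[Q0 + Q2]opprK; apply: symK'.
have h0' := symK' h0; have h2' := symK' h2.
case: (lerP 0 al) => a0; case: (lerP 0 be) => b0.
- case: (lerP be al) => ab.
  + have := conv0 h4' h0 b0 (ltac:(lra) : 0 <= al - be) (ltac:(lra) : be + (al - be) <= 1).
    have -> // : be *: (Q0 + Q2) + (al - be) *: Q0 = al *: Q0 + be *: Q2.
    by apply: vecP; rewrite !mxE; ring.
  + have := conv0 h4' h2 a0 (ltac:(lra) : 0 <= be - al) (ltac:(lra) : al + (be - al) <= 1).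
    have -> // : al *: (Q0 + Q2) + (be - al) *: Q2 = al *: Q0 + be *: Q2.
    by apply: vecP; rewrite !mxE; ring.
- have := conv0 h0 h2' a0 (ltac:(lra) : 0 <= - be) (ltac:(lra) : al + - be <= 1).
  have -> // : al *: Q0 + (- be) *: - Q2 = al *: Q0 + be *: Q2.
  by apply: vecP; rewrite !mxE; ring.
- have := conv0 h0' h2 (ltac:(lra) : 0 <= - al) b0 (ltac:(lra) : - al + be <= 1).
  have -> // : (- al) *: - Q0 + be *: Q2 = al *: Q0 + be *: Q2.
  by apply: vecP; rewrite !mxE; ring.
- case: (lerP al be) => ab.
  + have := conv0 (symK' h4') h0' (ltac:(lra) : 0 <= - be) (ltac:(lra) : 0 <= be - al) (ltac:(lra) : - be + (be - al) <= 1).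
    have -> // : (- be) *: - (Q0 + Q2) + (be - al) *: - Q0 = al *: Q0 + be *: Q2.
    by apply: vecP; rewrite !mxE; ring.
  + have := conv0 (symK' h4') h2' (ltac:(lra) : 0 <= - al) (ltac:(lra) : 0 <= al - be) (ltac:(lra) : - al + (al - be) <= 1).
    have -> // : (- al) *: - (Q0 + Q2) + (al - be) *: - Q2 = al *: Q0 + be *: Q2.
    by apply: vecP; rewrite !mxE; ring.
Qed.

Lemma disc_of_hex Q0 Q2 rho : 0 < rho ->
  (forall al be, rho ^+ 2 * (al ^+ 2 - al * be + be ^+ 2) <=
     dot3 (al *: Q0 + be *: Q2) (al *: Q0 + be *: Q2)) ->
  (forall al be, al ^+ 2 - al * be + be ^+ 2 <= 3 / 4 -> K (al *: Q0 + be *: Q2)) ->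
  section_disc_radii K (rho * s3 / 2).
Proof.
move=> rho0 hlow hK.
set g00 := dot3 Q0 Q0; set g02 := dot3 Q0 Q2; set g22 := dot3 Q2 Q2.
have hl : forall al be, rho ^+ 2 * (al ^+ 2 - al * be + be ^+ 2) <=
    al ^+ 2 * g00 + 2 * al * be * g02 + be ^+ 2 * g22.
  by move=> al be; rewrite -qf; apply: hlow.
have r2 : 0 < rho ^+ 2 by rewrite exprn_gt0.
have g00p : 0 < g00 by have := hl 1 0; nra.
set D := g00 * g22 - g02 ^+ 2.
have gD : 0 < g00 * D.
  have := hl g02 (- g00).
  have -> : g02 ^+ 2 * g00 + 2 * g02 * - g00 * g02 + (- g00) ^+ 2 * g22 = g00 * D by rewrite /D /g00 /g02 /g22; ring.
  have : 0 < g02 ^+ 2 - g02 * - g00 + (- g00) ^+ 2.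
    have -> : g02 ^+ 2 - g02 * - g00 + (- g00) ^+ 2 = (g02 + g00 / 2) ^+ 2 + 3 / 4 * g00 ^+ 2 by rewrite /g00 /g02; field.
    have := sqr_ge0 (g02 + g00 / 2); have : 0 < g00 ^+ 2 by rewrite exprn_gt0.
    lra.
  nra.
have Dp : 0 < D by rewrite pmulr_rgt0 in gD.
set k0 := (Num.sqrt g00)^-1.
set k1 := (Num.sqrt (g00 * D))^-1.
have k0e : k0 * (k0 * g00) = 1.
  by rewrite mulrA -expr2 /k0 exprVn sqr_sqrtr ?mulVf // ?lt0r_neq0 // ltW.
have k1e : k1 * (k1 * (g00 * D)) = 1.
  by rewrite mulrA -expr2 /k1 exprVn sqr_sqrtr ?mulVf // ?lt0r_neq0 // ltW.
set U := k0 *: Q0.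
set W := k1 *: (g00 *: Q2 + (- g02) *: Q0).
have uu : dot3 U U = 1 by rewrite /U dotZl dotZr -/g00.
have ww : dot3 W W = 1.
  rewrite /W dotZl dotZr qf (dotC Q2 Q0) -/g00 -/g02 -/g22.
  have -> : g00 ^+ 2 * g22 + 2 * g00 * - g02 * g02 + (- g02) ^+ 2 * g00 = g00 * D.
    by rewrite /D /g00 /g02 /g22; ring.
  exact: k1e.
have uw : dot3 U W = 0.
  rewrite /U /W dotZl dotZr dotDr !dotZr -/g00 -/g02; rewrite /g00 /g02; ring.
rewrite /section_disc_radii /=; split.
  by rewrite divr_ge0 // mulr_ge0 // ltW // s3_gt0.
exists U, W, 0; split; first by split => //; split.
move=> a b hab.
set al := a * k0 - b * k1 * g02.
set be := b * k1 * g00.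
have -> : 0 + a *: U + b *: W = al *: Q0 + be *: Q2.
  by rewrite /U /W /al /be; apply: vecP; rewrite !mxE; rewrite /k0 /k1 /g00 /g02; ring.
apply: hK.
have hd : dot3 (a *: U + b *: W) (a *: U + b *: W) = a ^+ 2 + b ^+ 2.
  by rewrite qf uu ww uw; ring.
have e : a *: U + b *: W = al *: Q0 + be *: Q2.
  by rewrite /U /W /al /be; apply: vecP; rewrite !mxE; rewrite /k0 /k1 /g00 /g02; ring.
have := hlow al be; rewrite -e hd.
have s3e : (s3 : R) ^+ 2 = 3 := @s3sq R.
have : (rho * s3 / 2) ^+ 2 = rho ^+ 2 * (3 / 4).
  by rewrite expr_div_n exprMn s3e; field.
move=> h1 h2.
rewrite h1 in hab.
have : rho ^+ 2 * (al ^+ 2 - al * be + be ^+ 2) <= rho ^+ 2 * (3 / 4) by lra.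
by rewrite ler_pM2l.
Qed.

End Hex.


Lemma entry_le (R : realType) (x : 'rV[R]_3) i : `|x 0 i| <= `|x|.
Proof.
have := le_bigmax 0 (fun ij : 'I_1 * 'I_3 => `|x ij.1 ij.2|) (0, i).
by rewrite -mx_normrE.
Qed.

Lemma bnd (R : realType) (K : set 'rV[R]_3) : compact K -> exists M, forall x, K x -> dot3 x x <= M.
Proof.
move=> cK. have h : [bounded x | x in K] := compact_bounded cK.
rewrite /bounded_near in h.
have [M hM] := filter_ex h.
exists (3 * M ^+ 2) => x Kx; have hx : `|x| <= M := hM x Kx.
rewrite dot3E.
have e0 := entry_le x i0; have e1 := entry_le x i1; have e2 := entry_le x i2.
have s0 : x 0 i0 * x 0 i0 <= M ^+ 2.
  rewrite -expr2 -real_normK ?num_real //; have n0 := normr_ge0 (x 0 i0).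
  have p1 : 0 <= M - `|x 0 i0| by lra.
  have p2 : 0 <= M + `|x 0 i0| by lra.
  have := mulr_ge0 p1 p2; lra.
have s1 : x 0 i1 * x 0 i1 <= M ^+ 2.
  rewrite -expr2 -real_normK ?num_real //; have n0 := normr_ge0 (x 0 i1).
  have p1 : 0 <= M - `|x 0 i1| by lra.
  have p2 : 0 <= M + `|x 0 i1| by lra.
  have := mulr_ge0 p1 p2; lra.
have s2 : x 0 i2 * x 0 i2 <= M ^+ 2.
  rewrite -expr2 -real_normK ?num_real //; have n0 := normr_ge0 (x 0 i2).
  have p1 : 0 <= M - `|x 0 i2| by lra.
  have p2 : 0 <= M + `|x 0 i2| by lra.
  have := mulr_ge0 p1 p2; lra.
lra.
Qed.

Section Lin.
Variable R : realType.
Local Notation V := 'rV[R]_3.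
Definition Pt (u v e : V) (a b t : R) : V := a *: u + b *: v + t *: e.
Lemma Pt_lin (u v e : V) a b t a' b' t' l m :
  l *: Pt u v e a b t + m *: Pt u v e a' b' t' = Pt u v e (l * a + m * a') (l * b + m * b') (l * t + m * t').
Proof. by apply: vecP; rewrite !mxE; ring. Qed.
Lemma Pt_opp (u v e : V) a b t : - Pt u v e a b t = Pt u v e (- a) (- b) (- t).
Proof. by apply: vecP; rewrite !mxE; ring. Qed.
Lemma Pt_add (u v e : V) a b t a' b' t' :
  Pt u v e a b t + Pt u v e a' b' t' = Pt u v e (a + a') (b + b') (t + t').
Proof. by apply: vecP; rewrite !mxE; ring. Qed.
End Lin.

Section Main.
Variable R : realType.
Local Notation V := 'rV[R]_3.
Variables (K : set V) (u v : V).
Hypothesis cK : compact K.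
Hypothesis convK : convex3 K.
Hypothesis symK : origin_symmetric K.
Hypothesis ouv : orthonormal2 u v.

Local Notation e := (cross u v).
Local Notation P := (Pt u v (cross u v)).

Lemma huu : dot3 u u = 1. Proof. by case: ouv. Qed.
Lemma hvv : dot3 v v = 1. Proof. by case: ouv => _ []. Qed.
Lemma huv : dot3 u v = 0. Proof. by case: ouv => _ []. Qed.

Lemma P_u a b t : dot3 (P a b t) u = a.
Proof. rewrite /Pt !dotDl !dotZl huu (dotC v u) huv frame_eu; ring. Qed.
Lemma P_v a b t : dot3 (P a b t) v = b.
Proof. rewrite /Pt !dotDl !dotZl hvv huv frame_ev; ring. Qed.
Lemma P_e a b t : dot3 (P a b t) e = t.
Proof.
rewrite /Pt !dotDl !dotZl (frame_ee ouv) (dotC u) (dotC v) frame_eu frame_ev; ring.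
Qed.
Lemma P_dec x : x = P (dot3 x u) (dot3 x v) (dot3 x e).
Proof. exact: decomp ouv x. Qed.

Definition GK a b t := K (P a b t).

Lemma GKconv a b t a' b' t' l : GK a b t -> GK a' b' t' -> 0 <= l <= 1 ->
  GK (l * a + (1 - l) * a') (l * b + (1 - l) * b') (l * t + (1 - l) * t').
Proof. by move=> h h' hl; rewrite /GK -Pt_lin; apply: convK. Qed.

Lemma GKsym a b t : GK a b t -> GK (- a) (- b) (- t).
Proof. by move=> h; rewrite /GK -Pt_opp symK; exists (P a b t). Qed.

Lemma GKcl a b : closed [set t | GK a b t].
Proof.
have cl : closed K by apply: compact_closed => //; exact: hausdorff_space_subproof.
have -> : [set t | GK a b t] = (fun t => P a b t) @^-1` K by [].
apply: preimage_closed => // t _.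
have h := @continuousD _ _ _ (fun _ : R => a *: u + b *: v) (fun t : R => t *: e) t (cvg_cst _)
   (@continuousZr_tmp _ _ _ (fun t : R => t) e t cvg_id).
exact: h.
Qed.

Variable B : R.
Hypothesis hB : forall x, K x -> dot3 x x <= B.

Lemma GKbd a b t : GK a b t -> `|t| <= B + 1.
Proof.
move=> /hB; rewrite (parseval ouv (P a b t)) P_e => h.
have h1 : t ^+ 2 <= B by have := sqr_ge0 (dot3 (P a b t) u); have := sqr_ge0 (dot3 (P a b t) v); lra.
have := sqr_ge0 (`|t| - 1); rewrite -(real_normK (num_real t)) in h1.
have := normr_ge0 t; nra.
Qed.

Variables (r p q : R).
Hypothesis hdisc : forall a b, (a - p) ^+ 2 + (b - q) ^+ 2 <= r ^+ 2 ->
  exists x, K x /\ dot3 x u = a /\ dot3 x v = b.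

Lemma GKproj a b : a ^+ 2 + b ^+ 2 <= r ^+ 2 -> exists t, GK a b t.
Proof.
move=> h.
have [x1 [k1 [u1 v1]]] : exists x, K x /\ dot3 x u = a + p /\ dot3 x v = b + q.
  by apply: hdisc; rewrite !addrK.
have [x2 [k2 [u2 v2]]] : exists x, K x /\ dot3 x u = p - a /\ dot3 x v = q - b.
  apply: hdisc.
  have -> : (p - a - p) ^+ 2 = a ^+ 2 by ring.
  by have -> : (q - b - q) ^+ 2 = b ^+ 2 by ring.
have ky : K (1 / 2 *: x1 + (1 - 1 / 2) *: - x2).
  apply: convK => //; first by rewrite symK; exists x2.
  by rewrite divr_ge0 //= ler_pdivrMr // mul1r ler1n.
set y := _ + _ in ky.
exists (dot3 y e); rewrite /GK.
have yu : dot3 y u = a by rewrite /y dotDl !dotZl dotNl u1 u2; field.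
have yv : dot3 y v = b by rewrite /y dotDl !dotZl dotNl v1 v2; field.
by rewrite -yu -yv -P_dec.
Qed.

Hypothesis r_gt0 : 0 < r.

Lemma sec_from_proj rho : 0 < rho < r -> section_disc_radii K (rho * s3 / 2).
Proof.
move=> hr.
have := @hexlift R GK (B + 1) r r_gt0 GKconv GKsym GKbd GKcl GKproj rho hr.
move=> [a [b [c0 [c2 [nab g0 g2 g4]]]]].
rewrite R4xE R4yE in g4.
have g4' : K (- (P a b c0 + P (R2x a b) (R2y a b) c2)).
  by rewrite Pt_add Pt_opp.
have rho0 : 0 < rho by case/andP: hr.
apply: (@disc_of_hex R K (P a b c0) (P (R2x a b) (R2y a b) c2) rho rho0).
  move=> al be.
  set y := al *: _ + be *: _.
  rewrite (parseval ouv y).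
  have -> : dot3 y u = al * a + be * R2x a b by rewrite /y dotDl !dotZl !P_u.
  have -> : dot3 y v = al * b + be * R2y a b by rewrite /y dotDl !dotZl !P_v.
  have -> : (al * a + be * R2x a b) ^+ 2 + (al * b + be * R2y a b) ^+ 2 =
    (a ^+ 2 + b ^+ 2) * ((al - be / 2) ^+ 2 + s3 ^+ 2 * be ^+ 2 / 4).
    by rewrite /R2x /R2y; field.
  rewrite s3sq nab.
  have -> : (al - be / 2) ^+ 2 + 3 * be ^+ 2 / 4 = al ^+ 2 - al * be + be ^+ 2 by field.
  have := sqr_ge0 (dot3 y e); lra.
move=> al be hq.
exact: (hexagon convK symK g0 g2 g4' hq).
Qed.

End Main.


Lemma sec_ub (R : realType) (K : set 'rV[R]_3) B : (forall x, K x -> dot3 x x <= B) ->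
  forall s, section_disc_radii K s -> s <= B + 1.
Proof.
move=> hB s [s0 [u [v [c [[uu _] hd]]]]].
have k1 := hd s 0 ltac:(by rewrite expr0n /= addr0).
have k2 := hd (- s) 0 ltac:(by rewrite sqrrN expr0n /= addr0).
set y1 := c + s *: u + 0 *: v in k1; set y2 := c + (- s) *: u + 0 *: v in k2.
have e : y1 - y2 = (2 * s) *: u by apply: vecP; rewrite !mxE; ring.
have h1 := hB _ k1; have h2 := hB _ k2.
have id : dot3 (y1 - y2) (y1 - y2) + dot3 (y1 + y2) (y1 + y2) = 2 * dot3 y1 y1 + 2 * dot3 y2 y2.
  by rewrite !dot3E !mxE; ring.
have g0 := dot_ge0 (y1 + y2).
rewrite e dotZl dotZr uu in id.
have hs : s ^+ 2 <= B by lra.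
have := sqr_ge0 (s - 1); nra.
Qed.

Lemma part1 (R : realType) (K : set 'rV[R]_3) :
  convex_body K -> origin_symmetric K -> 0 < r2 K -> rt2 K / r2 K <= 2 / Num.sqrt 3.
Proof.
case=> cK convK symK r2p.
have [B hB] := bnd cK.
have ubS := sec_ub hB.
have Sne : section_disc_radii K !=set0.
  apply/set0P; apply/negP => /eqP h; move: r2p; by rewrite /r2 h sup0 ltxx.
have hasS : has_sup (section_disc_radii K) by split => //; exists (B + 1) => s /ubS.
have s3p : 0 < Num.sqrt 3 :> R by rewrite sqrtr_gt0.
set X := 2 / Num.sqrt 3 * r2 K.
have Xp : 0 < X by rewrite /X mulr_gt0 // divr_gt0.
have ubP : forall t, projection_disc_radii K t -> t <= X.
  move=> t [t0 [u [v [ouv [p [q hdisc]]]]]].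
  have [te | tp] := eqVneq t 0; first by rewrite te ltW.
  have tp' : 0 < t by rewrite lt_def tp t0.
  have hr : forall rho, 0 < rho < t -> rho <= X.
    move=> rho hr.
    have := sec_from_proj cK convK symK ouv hB hdisc tp' hr.
    move=> /(sup_upper_bound hasS).
    rewrite -/(r2 K) /X /s3 => h.
    have -> : rho = rho * Num.sqrt 3 / 2 * (2 / Num.sqrt 3).
      by field; rewrite lt0r_neq0.
    rewrite (mulrC (2 / _)); apply: ler_wpM2r; last exact: h.
    by rewrite divr_ge0 // ltW.
  rewrite leNgt; apply/negP => Xt.
  have := hr ((X + t) / 2).
  have h2 : (0 < (X + t) / 2) && ((X + t) / 2 < t) by apply/andP; split; lra.
  move=> /(_ h2); lra.
rewrite ler_pdivrMr //.
have [Pe | Pne] := eqVneq (projection_disc_radii K) set0.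
  by rewrite /rt2 Pe sup0 ltW.
apply: ge_sup; first exact/set0P.
exact: ubP.
Qed.


Section Cube.
Variable R : realType.
Local Notation V := 'rV[R]_3.

Definition cube : set V := [set x | forall i, `[-1, 1] (x ord0 i)].

Lemma cubeP x : cube x <-> forall i, -1 <= x 0 i <= 1.
Proof. by split => h i; move: (h i); rewrite /= in_itv /=. Qed.

Lemma cube_compact : compact cube.
Proof. have h := (@rV_compact R 3 (fun _ => `[-1, 1]) (fun _ => @segment_compact R (-1) 1)).
exact h. Qed.

Lemma cube_convex : convex3 cube.
Proof.
move=> x y /cubeP hx /cubeP hy t /andP [t0 t1]; apply/cubeP => i.
have := hx i; have := hy i; rewrite !mxE => /andP [? ?] /andP [? ?].
apply/andP; split; nra.
Qed.

Lemma cube_sym : origin_symmetric cube.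
Proof.
rewrite /origin_symmetric; apply/seteqP; split => x.
  move=> hx; exists (- x); last by rewrite opprK.
  apply/cubeP => i; have := (proj1 (cubeP x) hx) i; rewrite mxE => /andP [? ?].
  apply/andP; split; lra.
move=> [y /cubeP hy <-]; apply/cubeP => i; have := hy i; rewrite mxE => /andP [? ?].
apply/andP; split; lra.
Qed.

Definition s2 : R := Num.sqrt 2.
Lemma s2sq : s2 ^+ 2 = 2. Proof. by rewrite sqr_sqrtr. Qed.
Lemma s2_gt0 : 0 < s2. Proof. by rewrite sqrtr_gt0. Qed.
Lemma s3sq' : (s3 : R) ^+ 2 = 3. Proof. exact: s3sq. Qed.
Lemma s3_gt0' : 0 < (s3 : R). Proof. exact: s3_gt0. Qed.

Definition kk : R := 1 / s2.
Definition mm : R := 1 / (s2 * s3).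
Lemma kk2 : kk ^+ 2 = 1 / 2.
Proof. by rewrite /kk expr_div_n s2sq expr1n. Qed.
Lemma mm2 : mm ^+ 2 = 1 / 6.
Proof. rewrite /mm expr_div_n exprMn s2sq s3sq' expr1n. by field. Qed.

Definition u0 : V := mk3 kk (- kk) 0.
Definition v0 : V := mk3 mm mm (- (2 * mm)).

Lemma ouv0 : orthonormal2 u0 v0.
Proof.
have := kk2; have := mm2 => h1 h2.
rewrite /orthonormal2 !dot3E /u0 /v0 !mk3E0 !mk3E1 !mk3E2.
split; first by nra.
split; last by ring.
nra.
Qed.

Lemma sq_le1 (x : R) : x ^+ 2 <= 1 -> -1 <= x <= 1.
Proof. move=> h; apply/andP; split; nra. Qed.

Definition rho2 : R := s3 / s2.
Lemma rho2sq : rho2 ^+ 2 = 3 / 2.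
Proof. by rewrite /rho2 expr_div_n s3sq' s2sq. Qed.
Lemma rho2_ge0 : 0 <= rho2.
Proof. by rewrite /rho2 divr_ge0 // ltW ?s3_gt0' ?s2_gt0. Qed.

Lemma r2_in : section_disc_radii cube rho2.
Proof.
split; first exact: rho2_ge0.
exists u0, v0, 0; split; first exact: ouv0.
move=> a b; rewrite rho2sq => hab.
have := kk2; have := mm2 => hm hk.
apply/cubeP; apply: ord3P; rewrite /u0 /v0 !mxE /=; apply: sq_le1.
- have cs : (kk * a + mm * b) ^+ 2 + (kk * b - mm * a) ^+ 2 = (a ^+ 2 + b ^+ 2) * (kk ^+ 2 + mm ^+ 2) by ring.
  rewrite add0r; have := sqr_ge0 (kk * b - mm * a).
  rewrite hk hm in cs. nra.
- have cs : ((- kk) * a + mm * b) ^+ 2 + ((- kk) * b - mm * a) ^+ 2 = (a ^+ 2 + b ^+ 2) * (kk ^+ 2 + mm ^+ 2) by ring.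
  rewrite add0r; have := sqr_ge0 ((- kk) * b - mm * a).
  rewrite hk hm in cs. nra.
- have e : mm ^+ 2 * b ^+ 2 = b ^+ 2 / 6 by rewrite hm; field.
  have := sqr_ge0 a; nra.
Qed.

Lemma r2_ub_i (u v c : V) s i : 0 <= s ->
  (forall a b, a ^+ 2 + b ^+ 2 <= s ^+ 2 -> cube (c + a *: u + b *: v)) ->
  2 / 3 <= u 0 i ^+ 2 + v 0 i ^+ 2 -> s ^+ 2 <= 3 / 2.
Proof.
move=> s0 hd hw.
set w := u 0 i ^+ 2 + v 0 i ^+ 2 in hw.
have w0 : 0 < w by lra.
set sg := Num.sqrt w.
have sg2 : sg ^+ 2 = w by rewrite sqr_sqrtr // ltW.
have sgp : 0 < sg by rewrite sqrtr_gt0.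
set a := s * u 0 i / sg; set b := s * v 0 i / sg.
have hab : a ^+ 2 + b ^+ 2 = s ^+ 2.
  have -> : a ^+ 2 + b ^+ 2 = s ^+ 2 * (u 0 i ^+ 2 + v 0 i ^+ 2) / sg ^+ 2.
    by rewrite /a /b; field; rewrite lt0r_neq0.
  by rewrite -/w -sg2; field; rewrite lt0r_neq0.
have c1 : cube (c + a *: u + b *: v) by apply: hd; rewrite hab.
have c2 : cube (c + (- a) *: u + (- b) *: v) by apply: hd; rewrite !sqrrN hab.
have e : a * u 0 i + b * v 0 i = s * sg.
  rewrite /a /b; have -> : s * u 0 i / sg * u 0 i + s * v 0 i / sg * v 0 i = s * sg ^+ 2 / sg.
    by rewrite sg2 /w; field; rewrite lt0r_neq0.
  by field; rewrite lt0r_neq0.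
have := proj1 (cubeP _) c1 i; have := proj1 (cubeP _) c2 i.
rewrite !mxE => /andP [h1 h2] /andP [h3 h4].
have ss : s * sg <= 1 by lra.
have ss0 : 0 <= s * sg by rewrite mulr_ge0 // ltW.
have : (s * sg) ^+ 2 <= 1 by nra.
rewrite exprMn sg2 => hs.
nra.
Qed.

Lemma r2_ub s : section_disc_radii cube s -> s <= rho2.
Proof.
move=> [s0 [u [v [c [[uu [vv _]] hd]]]]].
have : s ^+ 2 <= 3 / 2.
  move: uu vv; rewrite !dot3E => uu vv.
  have : 2 / 3 <= u 0 i0 ^+ 2 + v 0 i0 ^+ 2 \/ 2 / 3 <= u 0 i1 ^+ 2 + v 0 i1 ^+ 2 \/
         2 / 3 <= u 0 i2 ^+ 2 + v 0 i2 ^+ 2.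
    case: (lerP (2 / 3) (u 0 i0 ^+ 2 + v 0 i0 ^+ 2)) => h0; first by left.
    case: (lerP (2 / 3) (u 0 i1 ^+ 2 + v 0 i1 ^+ 2)) => h1; first by right; left.
    right; right; rewrite !expr2; lra.
  by case=> [h | [h | h]]; apply: (r2_ub_i s0 hd h).
rewrite -rho2sq => h.
have := rho2_ge0; nra.
Qed.

Lemma sq_le4 (d : R) : -2 <= d <= 2 -> d ^+ 2 <= 4.
Proof. move=> /andP [h1 h2]; nra. Qed.
Lemma sq4_bnd (d : R) : d ^+ 2 <= 4 -> -2 <= d <= 2.
Proof.
move=> h; rewrite -ler_norml.
have h' : `|d| ^+ 2 <= 2 ^+ 2 by rewrite real_normK ?num_real //; lra.
by rewrite ler_pXn2r ?nnegrE in h'.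
Qed.

Lemma rt2_ub_ab (u v : V) p q t al be : orthonormal2 u v -> 0 <= t ->
  (forall a b, (a - p) ^+ 2 + (b - q) ^+ 2 <= t ^+ 2 ->
     exists x, cube x /\ dot3 x u = a /\ dot3 x v = b) ->
  al ^+ 2 + be ^+ 2 = 1 -> al * u 0 i2 + be * v 0 i2 = 0 -> t ^+ 2 <= 2.
Proof.
move=> [uu [vv uv]] t0 hd hab h2.
have hd1 : (p + t * al - p) ^+ 2 + (q + t * be - q) ^+ 2 <= t ^+ 2.
  have -> : (p + t * al - p) ^+ 2 + (q + t * be - q) ^+ 2 = t ^+ 2 * (al ^+ 2 + be ^+ 2) by ring.
  by rewrite hab mulr1.
have hd2 : (p - t * al - p) ^+ 2 + (q - t * be - q) ^+ 2 <= t ^+ 2.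
  have -> : (p - t * al - p) ^+ 2 + (q - t * be - q) ^+ 2 = t ^+ 2 * (al ^+ 2 + be ^+ 2) by ring.
  by rewrite hab mulr1.
have [x1 [k1 [u1 v1]]] := hd _ _ hd1.
have [x2 [k2 [u2 v2]]] := hd _ _ hd2.
set d := x1 - x2.
set w := al *: u + be *: v.
have dw : dot3 d w = 2 * t.
  rewrite /d /w dotDr !dotZr !dotBl u1 u2 v1 v2.
  have -> : al * (p + t * al - (p - t * al)) + be * (q + t * be - (q - t * be)) = 2 * t * (al ^+ 2 + be ^+ 2) by ring.
  by rewrite hab mulr1.
have ww : dot3 w w = 1 by rewrite /w qf uu vv uv; lra.
have w2 : w 0 i2 = 0 by rewrite /w !mxE.
move: dw ww; rewrite !dot3E w2 !mulr0 !addr0 => dw ww.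
have := proj1 (cubeP _) k1 i0; have := proj1 (cubeP _) k1 i1.
have := proj1 (cubeP _) k2 i0; have := proj1 (cubeP _) k2 i1.
move=> /andP [a1 a2] /andP [a3 a4] /andP [a5 a6] /andP [a7 a8].
have dd0 : d 0 i0 = x1 0 i0 - x2 0 i0 by rewrite /d !mxE.
have dd1 : d 0 i1 = x1 0 i1 - x2 0 i1 by rewrite /d !mxE.
have e0 : d 0 i0 ^+ 2 <= 4 by apply: sq_le4; rewrite dd0; apply/andP; split; lra.
have e1 : d 0 i1 ^+ 2 <= 4 by apply: sq_le4; rewrite dd1; apply/andP; split; lra.
have cs : (d 0 i0 * w 0 i0 + d 0 i1 * w 0 i1) ^+ 2 + (d 0 i0 * w 0 i1 - d 0 i1 * w 0 i0) ^+ 2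
   = (d 0 i0 ^+ 2 + d 0 i1 ^+ 2) * (w 0 i0 * w 0 i0 + w 0 i1 * w 0 i1) by ring.
rewrite dw ww mulr1 in cs.
have := sqr_ge0 (d 0 i0 * w 0 i1 - d 0 i1 * w 0 i0).
lra.
Qed.

Lemma rt2_ub t : projection_disc_radii cube t -> t <= s2.
Proof.
move=> [t0 [u [v [ouv [p [q hd]]]]]].
have : t ^+ 2 <= 2.
  set n := u 0 i2 ^+ 2 + v 0 i2 ^+ 2.
  have [n0 | nn0] := eqVneq n 0.
    move: n0; rewrite /n => n0.
    have z1 := sqr_ge0 (u 0 i2); have z2 := sqr_ge0 (v 0 i2).
    have hu : u 0 i2 = 0.
      by apply/eqP; rewrite -sqrf_eq0 eq_le sqr_ge0 andbT; lra.
    have hv : v 0 i2 = 0.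
      by apply/eqP; rewrite -sqrf_eq0 eq_le sqr_ge0 andbT; lra.
    apply: (rt2_ub_ab (al := 1) (be := 0) ouv t0 hd); first by rewrite expr1n expr0n addr0.
    by rewrite hu hv; ring.
  have np : 0 < n by rewrite lt_def nn0 /n addr_ge0 // sqr_ge0.
  set sg := Num.sqrt n.
  have sg2 : sg ^+ 2 = n by rewrite sqr_sqrtr // ltW.
  have sgp : 0 < sg by rewrite sqrtr_gt0.
  apply: (rt2_ub_ab (al := v 0 i2 / sg) (be := - (u 0 i2 / sg)) ouv t0 hd).
    rewrite sqrrN !expr_div_n sg2 /n; field; by rewrite lt0r_neq0.
  by field; rewrite lt0r_neq0.
move=> h; have s2p := s2_gt0; rewrite -s2sq in h.
by rewrite -(ler_pXn2r (n := 2)) // nnegrE ltW.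
Qed.

Lemma rt2_in : projection_disc_radii cube s2.
Proof.
split; first exact: ltW s2_gt0.
exists u0, v0; split; first exact: ouv0.
exists 0, 0 => a b; rewrite !subr0 s2sq => hab.
have := kk2; have := mm2 => hm hk.
set p1 := kk * a + mm * b; set p2 := - kk * a + mm * b; set p3 := - (2 * mm) * b.
have d12 : (p1 - p2) ^+ 2 <= 4.
  have -> : (p1 - p2) ^+ 2 = 4 * kk ^+ 2 * a ^+ 2 by rewrite /p1 /p2; ring.
  rewrite hk; have := sqr_ge0 b; lra.
have d13 : (p1 - p3) ^+ 2 <= 4.
  have cs : (kk * a + 3 * mm * b) ^+ 2 + (kk * b - 3 * mm * a) ^+ 2 = (a ^+ 2 + b ^+ 2) * (kk ^+ 2 + 9 * mm ^+ 2) by ring.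
  rewrite hk hm in cs; have -> : p1 - p3 = kk * a + 3 * mm * b by rewrite /p1 /p3; ring.
  have := sqr_ge0 (kk * b - 3 * mm * a); lra.
have d23 : (p2 - p3) ^+ 2 <= 4.
  have cs : (- kk * a + 3 * mm * b) ^+ 2 + (- kk * b - 3 * mm * a) ^+ 2 = (a ^+ 2 + b ^+ 2) * (kk ^+ 2 + 9 * mm ^+ 2) by ring.
  rewrite hk hm in cs; have -> : p2 - p3 = - kk * a + 3 * mm * b by rewrite /p2 /p3; ring.
  have := sqr_ge0 (- kk * b - 3 * mm * a); lra.
have b12 := sq4_bnd d12.
have b13 := sq4_bnd d13.
have b23 := sq4_bnd d23.
move: b12 b13 b23 => /andP [? ?] /andP [? ?] /andP [? ?].
set mx := Num.max p1 (Num.max p2 p3); set mn := Num.min p1 (Num.min p2 p3).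
have x1 : p1 <= mx by rewrite /mx !le_max lexx.
have x2 : p2 <= mx by rewrite /mx !le_max lexx !orbT.
have x3 : p3 <= mx by rewrite /mx !le_max lexx !orbT.
have n1 : mn <= p1 by rewrite /mn !ge_min lexx.
have n2 : mn <= p2 by rewrite /mn !ge_min lexx !orbT.
have n3 : mn <= p3 by rewrite /mn !ge_min lexx !orbT.
have y1 : mx - 2 <= mn.
  rewrite /mn !le_min !lerBlDr /mx !ge_max.
  by repeat (apply/andP; split); lra.
set tau := - (mx + mn) / 2.
exists (mk3 (p1 + tau) (p2 + tau) (p3 + tau)); split; last split.
- apply/cubeP; apply: ord3P; rewrite ?mk3E0 ?mk3E1 ?mk3E2 /tau; apply/andP; split; lra.
- rewrite dot3E /u0 !mk3E0 !mk3E1 !mk3E2.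
  have -> : (p1 + tau) * kk + (p2 + tau) * - kk + (p3 + tau) * 0 = 2 * kk ^+ 2 * a by rewrite /p1 /p2; ring.
  by rewrite hk; field.
- rewrite dot3E /v0 !mk3E0 !mk3E1 !mk3E2.
  have -> : (p1 + tau) * mm + (p2 + tau) * mm + (p3 + tau) * - (2 * mm) = 6 * mm ^+ 2 * b by rewrite /p1 /p2 /p3; ring.
  by rewrite hm; field.
Qed.

End Cube.

Arguments s2 {R}.
Arguments rho2 {R}.

Lemma part2 (R : realType) : exists K : set 'rV[R]_3,
  [/\ convex_body K, origin_symmetric K, 0 < r2 K & rt2 K / r2 K = 2 / Num.sqrt 3].
Proof.
exists (@cube R).
have s2p := @s2_gt0 R; have s3p := @s3_gt0' R.
have r2e : r2 (@cube R) = rho2.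
  have ne : section_disc_radii (@cube R) !=set0 by exists rho2; exact: r2_in.
  apply/eqP; rewrite eq_le; apply/andP; split.
    by apply: ge_sup => // s; apply: r2_ub.
  apply: sup_upper_bound; last exact: r2_in.
  by split => //; exists rho2 => s; apply: r2_ub.
have rt2e : rt2 (@cube R) = s2.
  have ne : projection_disc_radii (@cube R) !=set0 by exists s2; exact: rt2_in.
  apply/eqP; rewrite eq_le; apply/andP; split.
    by apply: ge_sup => // s; apply: rt2_ub.
  apply: sup_upper_bound; last exact: rt2_in.
  by split => //; exists s2 => s; apply: rt2_ub.
split.
- split; [exact: cube_compact | exact: cube_convex].
- exact: cube_sym.
- by rewrite r2e /rho2 divr_gt0.
- rewrite r2e rt2e /rho2.
  have -> : s2 / (s3 / s2) = s2 ^+ 2 / s3 :> R.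
    by field; apply/andP; split; rewrite lt0r_neq0.
  by rewrite s2sq.
Qed.

Theorem theorem2p2 (R : realType) :
  (forall K : set 'rV[R]_3,
      convex_body K -> origin_symmetric K -> 0 < r2 K ->
      rt2 K / r2 K <= 2 / Num.sqrt 3) /\
  (exists K : set 'rV[R]_3,
      [/\ convex_body K, origin_symmetric K, 0 < r2 K &
          rt2 K / r2 K = 2 / Num.sqrt 3]).
Proof.
split; first by move=> K hK hs hr; exact: part1.
exact: part2.
Qed.
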